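(* Let $V$ be a fixed finite set. If $\mu_1,\mu_2\colon\binom V2\to\mathbb{Z}_+$ satisfy $\mu_1(e)\leqslant\mu_2(e)$ for all $e\in\binom V2$, then $n(\mu_1,V)\leqslant n(\mu_2,V)$.
   Context: For a finite set $V$ with $|V|=n$ and $\mu\colon\binom V2\to\mathbb{Z}_+$, $n(\mu,V)=\sum_{J\subseteq V,|J|\geqslant2}(-1)^{n-|J|}\prod_{e\in\binom J2}\mu(e)+(-1)^{n-1}(n-1)$; this is the number of $(n-1)$-spheres in a wedge homotopy equivalent to the edge inflation $(\Delta_V)_\mu$ of the full simplex on $V$. *)

(* Defs.v *)
From mathcomp Require Import all_boot all_order all_algebra.
Set Implicit Arguments. Unset Strict Implicit. Unset Printing Implicit Defensive.
Import GRing.Theory Num.Theory.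
Local Open Scope ring_scope.

(* A multiplicity function mu : binom(V,2) -> Z_+ is represented as a function
   {set V} -> nat whose values on 2-element subsets are >= 1 (values elsewhere
   are irrelevant). *)
Definition is_edge (V : finType) (e : {set V}) : bool := #|e| == 2%N.

(* n(mu, V) = sum_{J subset V, |J| >= 2} (-1)^(n - |J|) prod_{e in binom(J,2)} mu(e)
              + (-1)^(n-1) (n-1),   with n = |V|.
   (-1)^(n-1) is written (-1)^(n+1), equal for all n, avoiding truncated subtraction. *)
Definition n_mu (V : finType) (mu : {set V} -> nat) : int :=
  \sum_(J : {set V} | (2 <= #|J|)%N)
     (-1) ^+ (#|V| - #|J|) * (\prod_(e : {set V} | (e \subset J) && is_edge e) (mu e)%:Z)
  + (-1) ^+ (#|V|.+1) * ((#|V|)%:Z - 1).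

(* Main.v *)
Require Import Defs.
From mathcomp Require Import all_boot all_order all_algebra.
From mathcomp Require Import ring.
Import GRing.Theory Num.Theory.
Local Open Scope ring_scope.

Section Aux.
Variable V : finType.

Definition sgnJ (J : {set V}) : int := (-1) ^+ (#|V| - #|J|).
Definition PJ (mu : {set V} -> nat) (J : {set V}) : int :=
  \prod_(e : {set V} | (e \subset J) && is_edge e) (mu e)%:Z.
Definition Gm (mu : {set V} -> nat) : int := \sum_(J : {set V}) sgnJ J * PJ mu J.

Lemma nmuG mu : n_mu mu = Gm mu +
  ((-1) ^+ (#|V|.+1) * ((#|V|)%:Z - 1) - \sum_(J : {set V} | ~~ (2 <= #|J|)%N) sgnJ J).
Proof.
rewrite /n_mu /Gm [X in _ = X + _](bigID (fun J : {set V} => (2 <= #|J|)%N)) /=.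
have -> : \sum_(J : {set V} | ~~ (2 <= #|J|)%N) sgnJ J * PJ mu J =
          \sum_(J : {set V} | ~~ (2 <= #|J|)%N) sgnJ J.
  apply: eq_bigr => J hJ; rewrite /PJ big1 ?mulr1 // => e /andP[eJ he].
  exfalso; move: hJ; rewrite -(eqP he); by rewrite subset_leq_card.
rewrite /sgnJ /PJ; ring.
Qed.

Lemma sgnJ_prod J : sgnJ J = \prod_(i : V) (if i \in J then 1 else -1).
Proof.
rewrite (bigID (fun i => i \in J)) /= big1; last by move=> i ->.
rewrite mul1r.
under eq_bigr => i /negbTE -> do [].
rewrite prodr_const /sgnJ.
have -> : #|[pred i | i \notin J]| = #|~: J|.
  by apply: eq_card => i; rewrite !inE.
by rewrite (cardsCs J) subKn // -(cardsC J) leq_addl.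
Qed.

Definition xm (mu : {set V} -> nat) (e : {set V}) : int :=
  if is_edge e then (mu e)%:Z - 1 else 0.

Definition cS (S : {set {set V}}) : int :=
  \sum_(J : {set V}) sgnJ J * \prod_(e in S) ((e \subset J)%:R : int).

Lemma Gm_expand mu : Gm mu = \sum_(S : {set {set V}}) (\prod_(e in S) xm mu e) * cS S.
Proof.
have step : forall J, PJ mu J = \sum_(S : {set {set V}})
     (\prod_(e in S) xm mu e) * \prod_(e in S) ((e \subset J)%:R : int).
  move=> J.
  have -> : PJ mu J = \prod_(e : {set V}) ((if e \subset J then xm mu e else 0) + 1).
    rewrite /PJ big_mkcond /=; apply: eq_bigr => e _.
    rewrite /xm; case: (e \subset J); case: (is_edge e) => /=; ring.
  rewrite bigA_distr; apply: eq_bigr => S _.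
  rewrite -big_split /= [RHS]big_mkcond /=; apply: eq_bigr => e _.
  case: (e \in S) => //; case: (e \subset J) => /=; ring.
rewrite /Gm /cS.
under eq_bigr do rewrite step big_distrr /=.
rewrite exchange_big /=; apply: eq_bigr => S _.
rewrite big_distrr /=; apply: eq_bigr => J _; ring.
Qed.

Lemma cS_ge0 S : 0 <= cS S.
Proof.
pose A := \bigcup_(e in S) e.
pose g := fun i : V => if i \in A then (0:int) else -1.
have -> : cS S = \prod_(i : V) (1 + g i).
  rewrite bigA_distr /cS; apply: eq_bigr => J _.
  rewrite sgnJ_prod.
  have [AJ|nAJ] := boolP (A \subset J).
    rewrite [X in _ * X]big1 ?mulr1; last first.
      move=> e eS; have -> : e \subset J.
        by apply: subset_trans AJ; apply: (bigcup_sup e eS).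
      by [].
    apply: eq_bigr => i _; rewrite /g.
    case: ifP => // iJ; case: ifP => // iA.
    by move: iJ; rewrite (subsetP AJ i iA).
  have [i iA iJ] : exists2 i, i \in A & i \notin J.
    by move/subsetPn: nAJ => [i ??]; exists i.
  rewrite (bigD1 i) //= [X in _ = X](bigD1 i) //= (negbTE iJ) /g iA mul0r.
  have [e eS eJ] : exists2 e, e \in S & ~~ (e \subset J).
    apply/exists_inP; apply: contraR nAJ; rewrite negb_exists_in => /forall_inP H.
    by apply/bigcupsP => e eS; move: (H e eS); rewrite negbK.
  by rewrite (bigD1 e) //= (negbTE eJ) mul0r mulr0.
apply: prodr_ge0 => i _; rewrite /g; case: ifP => //.
Qed.

End Aux.

Theorem corollary4p8 (V : finType) (mu1 mu2 : {set V} -> nat) :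
  (forall e : {set V}, is_edge e -> (0 < mu1 e)%N) ->
  (forall e : {set V}, is_edge e -> (0 < mu2 e)%N) ->
  (forall e : {set V}, is_edge e -> (mu1 e <= mu2 e)%N) ->
  n_mu mu1 <= n_mu mu2.
Proof.
move=> h1 h2 h12.
rewrite !nmuG lerD2r !Gm_expand; apply: ler_sum => S _.
apply: ler_wpM2r; first exact: cS_ge0.
apply: ler_prod => e _; rewrite /xm; case: ifP => he //=.
have a := h1 e he; have b := h12 e he.
apply/andP; split.
  by rewrite subr_ge0 lez_nat.
by rewrite lerD2r lez_nat.
Qed.
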